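(* Let $M=(Q,\mathcal{A},\Delta,I,F)$ be a complete symbolic finite automaton. Let $n=|Q|$, $m=|\Delta|$, $k$ the size of the largest predicate used in $\Delta$, $m_q$ the number of transitions of $\Delta$ leaving $q$ for each $q\in Q$, and $\hat m=\max\{m_q\mid q\in Q\}$. Then the algorithm LocalSim described in the context computes $\preceq_M$ in time $$O\Big(n\sum_{q\in Q} m_q 2^{m_q} + m\,\mathcal{C}_{sat}(\hat m,k)\sum_{q\in Q}2^{m_q}\Big).$$
   Context: An effective Boolean algebra is $\mathcal{A}=(\mathfrak{D},\mathbb{P},[\![\cdot]\!],\vee,\wedge,\neg)$ where $\mathbb{P}$ is a set of predicates closed under $\vee,\wedge,\neg$, with an interpretation $[\![\cdot]\!]:\mathbb{P}\to 2^{\mathfrak{D}}$ mapping $\vee,\wedge,\neg$ to union, intersection and complement w.r.t. $\mathfrak{D}$; $\mathit{IsSat}(\varphi)$ means $[\![\varphi]\!]\neq\emptyset$, and the operations and $\mathit{IsSat}$ are computable. Predicates have a measurable size; $\mathcal{C}_{sat}(x,y)$ denotes the worst-case complexity of constructing a predicate obtained by applying $x$ operations of $\mathcal{A}$ to predicates of size at most $y$ and checking its satisfiability. An SFA is $M=(Q,\mathcal{A},\Delta,I,F)$ with finite state set $Q$, finite transition relation $\Delta\subseteq Q\times\mathbb{P}\times Q$ whose predicates are satisfiable, initial states $I$, final states $F$; its concrete transitions are $[\![\Delta]\!]=\{(q,a,p)\mid (q,\psi,p)\in\Delta, a\in[\![\psi]\!]\}$. $M$ is complete if for every $q\in Q$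 and $a\in\mathfrak{D}$ there is $p$ with $(q,a,p)\in[\![\Delta]\!]$. A relation $S\subseteq Q\times Q$ is a simulation on $M$ if whenever $(p,r)\in S$: $p\in F$ implies $r\in F$, and for all $a\in\mathfrak{D}$ and $(p,a,p')\in[\![\Delta]\!]$ there is $(r,a,r')\in[\![\Delta]\!]$ with $(p',r')\in S$; $\preceq_M$ is the unique maximal simulation. The minterms $\mathrm{Minterms}(\Phi)$ of a finite set $\Phi$ of predicates are the satisfiable predicates among $\{\bigwedge_{\phi\in\Phi'}\phi\wedge\bigwedge_{\phi\in\Phi\setminus\Phi'}\neg\phi\mid\Phi'\subseteq\Phi\}$. For $p\in Q$ let $\mathbb{P}_{\Delta,p}$ be the set of predicates on transitions of $\Delta$ leaving $p$. The locally mintermised form $\Delta_L$ of $\Delta$ is obtained by replacing each $(p,\varphi,q)\in\Delta$ by $\{(p,\omega,q)\mid\omega\in\mathrm{Minterms}(\mathbb{P}_{\Delta,p}),\ \mathit{IsSat}(\omega\wedge\varphi)\}$. Algorithm LocalSim (input: a complete SFA $M$): 1. Compute $\Delta_L$. 2. For all $p,q\in Q$ and every transition $(q,\psi,t)\in\Delta_L$, set a counter $N_\psi(q,p):=|\{r\mid (q,\psi,r)\in\Delta_L\}|$. 3. Set $\mathit{Sim}:=Q\times Q$ and $\mathit{NotSim}:=F\times(Q\setminus F)$. 4. While $\mathit{NotSim}\neq\emptyset$: remove some $(i,j)$ from $\mathit{NotSim}$ and from $\mathit{Sim}$; for every transition $(t,\psi_{tj},j)\in\Delta_L$: decrement $N_{\psi_{tj}}(t,i)$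 by one, and if it becomes $0$, then for every transition $(s,\varphi_{si},i)\in\Delta$ with $(s,t)\in\mathit{Sim}$, if $\mathit{IsSat}(\psi_{tj}\wedge\varphi_{si})$ then add $(s,t)$ to $\mathit{NotSim}$. 5. Return $\mathit{Sim}$. *)

(* Defs.v *)
From Stdlib Require List.
From HB Require Import structures.
From mathcomp Require Import all_boot.

Set Implicit Arguments.
Unset Strict Implicit.
Unset Printing Implicit Defensive.

Record EBA := MkEBA {
  dom : Type;
  prd : Type;
  interp : prd -> dom -> Prop;
  por : prd -> prd -> prd;
  pand : prd -> prd -> prd;
  pneg : prd -> prd;
  interp_or : forall a b x, interp (por a b) x <-> interp a x \/ interp b x;
  interp_and : forall a b x, interp (pand a b) x <-> interp a x /\ interp b x;
  interp_neg : forall a x, interp (pneg a) x <-> ~ interp a x;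
  issat : prd -> bool;
  issatP : forall a, issat a <-> exists x, interp a x;
  psize : prd -> nat;
  (* csat x y : worst-case cost of constructing a predicate obtained by      *)
  (* applying (at most) x operations to predicates of size at most y and     *)
  (* checking its satisfiability.  Being a worst case over "at most",        *)
  (* it is monotone.                                                         *)
  csat : nat -> nat -> nat;
  csat_mono : forall x x' y y', x <= x' -> y <= y' -> csat x y <= csat x' y'
}.

Record SFA (A : EBA) := MkSFA {
  st : finType;
  delta : seq (st * prd A * st);
  init : {set st};
  final : {set st};
  delta_sat : forall t, List.In t delta -> issat t.1.2
}.

Inductive bterm (P : Type) :=
| BBase of P
| BAnd of bterm P & bterm P
| BNot of bterm P.

Fixpoint beval (A : EBA) (t : bterm (prd A)) : prd A :=
  match t with
  | BBase p => p
  | BAnd a b => @pand A (beval a) (beval b)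
  | BNot a => @pneg A (beval a)
  end.

Fixpoint bops (P : Type) (t : bterm P) : nat :=
  match t with
  | BBase _ => 0
  | BAnd a b => (bops a + bops b).+1
  | BNot a => bops a
  end.

Fixpoint bsize (A : EBA) (t : bterm (prd A)) : nat :=
  match t with
  | BBase p => @psize A p
  | BAnd a b => maxn (bsize a) (bsize b)
  | BNot a => bsize a
  end.

Definition ccost (A : EBA) (t : bterm (prd A)) : nat := @csat A (bops t) (bsize t).

Fixpoint signvecs (n : nat) : seq (seq bool) :=
  if n is n'.+1 then [seq b :: v | b <- [:: true; false], v <- signvecs n']
  else [:: [::]].

Definition lit (P : Type) (b : bool) (p : P) : bterm P :=
  if b then BBase p else BNot (BBase p).

Fixpoint conj_list (P : Type) (x : bterm P) (s : seq (bterm P)) : bterm P :=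
  match s with
  | [::] => x
  | y :: s' => BAnd x (conj_list y s')
  end.

Definition minterm (P : Type) (ps : seq P) (b : seq bool) : option (bterm P) :=
  match zip b ps with
  | [::] => None
  | (b0, p0) :: r => Some (conj_list (lit b0 p0) [seq lit x.1 x.2 | x <- r])
  end.

Section Algo.
Variable A : EBA.
Variable M : SFA A.
Local Notation Q := (st M).
Local Notation Delta := (delta M).

Definition trans := (Q * prd A * Q)%type.
Definition src (t : trans) : Q := t.1.1.
Definition lab (t : trans) : prd A := t.1.2.
Definition tgt (t : trans) : Q := t.2.

Definition ctrans (q : Q) (a : dom A) (p : Q) : Prop :=
  exists t, List.In t Delta /\ src t = q /\ tgt t = p /\ @interp A (lab t) a.

Definition complete : Prop := forall (q : Q) (a : dom A), exists p, ctrans q a p.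

Definition is_simulation (S : Q -> Q -> Prop) : Prop :=
  forall p r, S p r ->
    (p \in final M -> r \in final M) /\
    (forall a p', ctrans p a p' -> exists r', ctrans r a r' /\ S p' r').

Definition maxsim (p r : Q) : Prop := exists S, is_simulation S /\ S p r.

Definition outs (p : Q) : seq trans := [seq t <- Delta | src t == p].
Definition mq (p : Q) : nat := size (outs p).
Definition mhat : nat := \max_(q : Q) mq q.
Definition ksize : nat := \max_(t <- Delta) @psize A (lab t).

Definition bound : nat :=
  #|Q| * (\sum_(q : Q) mq q * 2 ^ mq q)
  + size Delta * @csat A mhat ksize * (\sum_(q : Q) 2 ^ mq q).

(* an entry (p, omega, q) of Delta_L; omega is identified by its sign vector *)
Record lentry := LE { le_src : Q; le_sig : seq bool;
                      le_term : bterm (prd A); le_tgt : Q }.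

Definition step1_at (p : Q) : seq lentry * nat :=
  let os := outs p in
  let ps := map lab os in
  let vs := signvecs (size ps) in
  let cands := pmap (fun b => omap (fun w => (b, w)) (minterm ps b)) vs in
  let mts := [seq bw <- cands | @issat A (beval bw.2)] in
  let pairs := [seq (t, bw) | t <- os, bw <- mts] in
  let chk (x : trans * (seq bool * bterm (prd A))) := BAnd x.2.2 (BBase (lab x.1)) in
  let ents := [seq LE p x.2.1 x.2.2 (tgt x.1)
              | x <- [seq x <- pairs | @issat A (beval (chk x))]] in
  (ents, size Delta                               (* selecting outs p  *)
         + size ps * size vs                      (* generating candidates *)
         + \sum_(bw <- cands) (1 + ccost bw.2)     (* IsSat of candidates *)
         + \sum_(x <- pairs) (1 + ccost (chk x))). (* IsSat(omega /\ phi) *)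

Definition DL : seq lentry := flatten [seq (step1_at p).1 | p <- enum Q].
Definition cost1 : nat := \sum_(p <- enum Q) (step1_at p).2.

Definition ctr := Q -> seq bool -> Q -> nat.
Definition upd (N : ctr) (t : Q) (b : seq bool) (i : Q) (v : nat) : ctr :=
  fun t' b' i' => if [&& t' == t, b' == b & i' == i] then v else N t' b' i'.

Definition N0 : ctr :=
  foldl (fun N (x : lentry * Q) =>
           upd N (le_src x.1) (le_sig x.1) x.2 (N (le_src x.1) (le_sig x.1) x.2).+1)
        (fun _ _ _ => 0) [seq (e, p) | e <- DL, p <- enum Q].
Definition cost2 : nat := size DL * #|Q|.

Definition predL (j : Q) : seq lentry := [seq e <- DL | le_tgt e == j].
Definition predD (i : Q) : seq trans := [seq t <- Delta | tgt t == i].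
Definition cost_pred : nat := #|Q| * size DL + #|Q| * size Delta.

Definition Sim0 : {set Q * Q} := setT.
Definition NotSim0 : {set Q * Q} :=
  [set x | (x.1 \in final M) && (x.2 \notin final M)].
Definition cost3 : nat := #|Q| * #|Q| + #|Q| * #|Q|.

Record lstate := LS { ls_sim : {set Q * Q}; ls_notsim : {set Q * Q}; ls_ctr : ctr }.

Definition init_state : lstate := LS Sim0 NotSim0 N0.
Definition pre_cost : nat := cost1 + cost2 + cost_pred + cost3.

Definition scan_preds (S : {set Q * Q}) (i t : Q) (w : bterm (prd A))
    (NS : {set Q * Q}) : {set Q * Q} * nat :=
  foldl (fun (acc : {set Q * Q} * nat) (d : trans) =>
           if (src d, t) \in S then
             let chk := BAnd w (BBase (lab d)) in
             ((if @issat A (beval chk) then (src d, t) |: acc.1 else acc.1),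
              acc.2 + 1 + ccost chk)
           else (acc.1, acc.2 + 1))
        (NS, 0) (predD i).

Definition body (i j : Q) (s : lstate) : lstate * nat :=
  let S := ls_sim s :\ (i, j) in
  foldl (fun (acc : lstate * nat) (e : lentry) =>
           let N := ls_ctr acc.1 in
           let v := (N (le_src e) (le_sig e) i).-1 in
           let N' := upd N (le_src e) (le_sig e) i v in
           if v == 0 then
             let r := scan_preds S i (le_src e) (le_term e) (ls_notsim acc.1) in
             (LS S r.1 N', acc.2 + 1 + r.2)
           else (LS S (ls_notsim acc.1) N', acc.2 + 1))
        (LS S (ls_notsim s :\ (i, j)) (ls_ctr s), 1) (predL j).

(* executions of the while loop, "remove SOME (i,j)": any choice *)
Inductive lrun : lstate -> nat -> lstate -> Prop :=
| lrun_nil s : lrun s 0 s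
| lrun_cons s i j s' c c' s'' :
    (i, j) \in ls_notsim s -> body i j s = (s', c) -> lrun s' c' s'' ->
    lrun s (c + c') s''.

End Algo.

(* Main.v *)
Require Import Defs.
From HB Require Import structures.
From mathcomp Require Import all_boot.
From Stdlib Require Import Classical.
From mathcomp Require Import zify.
Set Implicit Arguments. Unset Strict Implicit. Unset Printing Implicit Defensive.

Lemma In_filter (T : Type) (p : pred T) (s : seq T) x :
  List.In x (filter p s) <-> List.In x s /\ p x.
Proof.
elim: s => [|y s IH] /=; first by split=> // -[].
case Hy: (p y) => /=.
- rewrite IH; split.
  + by case=> [<-|[]]; [split; [left|]|split; [right|]].
  + by case=> [[->|H] Hx]; [left|right].
- rewrite IH; split.
  + by case=> H1 H2; split; [right|].
  + by case=> [[<-|H] Hx]; [rewrite Hy in Hx|].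
Qed.

Lemma In_map (T U : Type) (f : T -> U) (s : seq T) y :
  List.In y (map f s) <-> exists x, List.In x s /\ y = f x.
Proof.
elim: s => [|x s IH] /=; first by split=> // -[x []].
rewrite IH; split.
- by case=> [<-|[z [Hz ->]]]; [exists x; split; [left|]|exists z; split; [right|]].
- by case=> z [[<-|Hz] ->]; [left|right; exists z].
Qed.

Lemma In_cat (T : Type) (s1 s2 : seq T) x :
  List.In x (s1 ++ s2) <-> List.In x s1 \/ List.In x s2.
Proof. by split; [apply: List.in_app_or|apply: List.in_or_app]. Qed.

Lemma In_flatten (T : Type) (ss : seq (seq T)) x :
  List.In x (flatten ss) <-> exists s, List.In s ss /\ List.In x s.
Proof.
elim: ss => [|s ss IH] /=; first by split=> // -[s []].
rewrite In_cat IH; split.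
- by case=> [H|[s' [H1 H2]]]; [exists s; split; [left|]|exists s'; split; [right|]].
- by case=> s' [[<-|H1] H2]; [left|right; exists s'].
Qed.

Lemma In_allpairs (S T R : Type) (f : S -> T -> R) (s : seq S) (t : S -> seq T) z :
  List.In z [seq f x y | x <- s, y <- t x] <->
  exists x y, List.In x s /\ List.In y (t x) /\ z = f x y.
Proof.
rewrite In_flatten; split.
- case=> l [/In_map [x [Hx ->]] /In_map [y [Hy ->]]].
  by exists x, y.
- case=> x [y [Hx [Hy ->]]]; exists [seq f x y | y <- t x]; split.
  + by apply/In_map; exists x.
  + by apply/In_map; exists y.
Qed.

Lemma In_pmap (T U : Type) (f : T -> option U) (s : seq T) y :
  List.In y (pmap f s) <-> exists x, List.In x s /\ f x = Some y.
Proof.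
elim: s => [|x s IH] /=; first by split=> // -[x []].
case Hf: (f x) => [u|] /=; rewrite IH; split.
- by case=> [<-|[z [Hz Hz']]]; [exists x; split; [left|]|exists z; split; [right|]].
- by case=> z [[<-|Hz] Hz']; [left; rewrite Hf in Hz'; case: Hz'|right; exists z].
- by case=> z [Hz Hz']; exists z; split; [right|].
- by case=> z [[<-|Hz] Hz']; [rewrite Hf in Hz'|exists z].
Qed.

Lemma count0_In (T : Type) (p : pred T) (s : seq T) x :
  count p s = 0 -> List.In x s -> p x = false.
Proof.
elim: s => [|y s IH] //= H [<-|Hx].
- by case: (p y) H.
- by apply: IH => //; case: (p y) H.
Qed.

Lemma count_pos_In (T : Type) (p : pred T) (s : seq T) :
  0 < count p s -> exists x, List.In x s /\ p x.
Proof.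
elim: s => [|y s IH] //=.
case Hy: (p y) => /= H; first by exists y; split; [left|].
by case: (IH H) => x [Hx Hpx]; exists x; split; [right|].
Qed.

Lemma In_count_pos (T : Type) (p : pred T) (s : seq T) x :
  List.In x s -> p x -> 0 < count p s.
Proof.
elim: s => [|y s IH] //= [<-|Hx] Hp; first by rewrite Hp.
by rewrite addnC ltn_addr // IH.
Qed.

Lemma sum_count_eq (X : Type) (T : finType) (f : X -> T) (s : seq X) :
  \sum_(q : T) count (fun x => f x == q) s = size s.
Proof.
elim: s => [|x s IH] /=; first by rewrite big1.
rewrite big_split /= IH (bigD1 (f x)) //= eqxx big1 // => q Hq.
by rewrite eq_sym (negbTE Hq).
Qed.

Lemma sum_seq_drop (X : Type) (l : seq X) (f g : X -> nat) k0 c :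
  List.In k0 l -> (forall k, g k <= f k) -> g k0 + c <= f k0 ->
  \sum_(k <- l) g k + c <= \sum_(k <- l) f k.
Proof.
move=> Hin Hle H0; elim: l Hin => [|k l IH] //= Hin; rewrite !big_cons.
case: Hin => [Hk|Hin].
- subst k; rewrite -addnA (addnC _ c) addnA; apply: leq_add => //.
  by apply: leq_sum => i _.
- by rewrite -addnA leq_add // IH.
Qed.

Lemma sum_seq_le (X : Type) (l : seq X) (f g : X -> nat) :
  (forall k, g k <= f k) -> \sum_(k <- l) g k <= \sum_(k <- l) f k.
Proof. by move=> H; apply: leq_sum => i _. Qed.

Lemma sum_seq_bound (X : Type) (l : seq X) (f : X -> nat) c :
  (forall k, List.In k l -> f k <= c) -> \sum_(k <- l) f k <= size l * c.
Proof.
elim: l => [|k l IH] H; first by rewrite big_nil.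
rewrite big_cons /= mulSn leq_add //; first by apply: H; left.
by apply: IH => x Hx; apply: H; right.
Qed.

Lemma pow_mix (a b : nat) : 2 ^ a * b <= a * 2 ^ a + b * 2 ^ b.
Proof.
case: (leqP b a) => H.
- apply: leq_trans (leq_addr (b * 2 ^ b) _).
  rewrite [X in _ <= X]mulnC; exact: leq_mul (leqnn _) H.
- apply: leq_trans (leq_addl (a * 2 ^ a) _).
  rewrite [X in _ <= X]mulnC; apply: leq_mul (leqnn _).
  by rewrite leq_exp2l // ltnW.
Qed.

Lemma In_mem (T : eqType) (s : seq T) x : x \in s -> List.In x s.
Proof.
elim: s => [|y s IH] //=; rewrite in_cons => /orP [/eqP ->|H]; [by left|by right; apply: IH].
Qed.

Lemma In_signvecs n b : List.In b (signvecs n) <-> size b = n.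
Proof.
elim: n b => [|n IH] b.
- split; first by case=> [<-|[]].
  by case: b => // _; left.
- change (List.In b [seq x :: v | x <- [:: true; false], v <- signvecs n] <-> size b = n.+1).
  rewrite (In_allpairs (fun x v => x :: v) [:: true; false] (fun _ => signvecs n)); split.
  + by case=> x [v [_ [/IH Hv ->]]] /=; rewrite Hv.
  + case: b => // x v [Hv]; exists x, v; split; last split => //.
    * by case: x; [left|right; left].
    * exact/IH.
Qed.

Lemma size_signvecs n : size (signvecs n) = 2 ^ n.
Proof.
elim: n => [|n IH] //=.
by rewrite cats0 size_cat !size_map IH expnS mul2n -addnn.
Qed.

Lemma bops_lit (P : Type) b (p : P) : bops (lit b p) = 0.
Proof. by case: b. Qed.

Lemma bops_conj (P : Type) (x : bterm P) (r : seq (bool * P)) :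
  bops (conj_list x [seq lit y.1 y.2 | y <- r]) = bops x + size r.
Proof.
elim: r x => [|y r IH] x /=; first by rewrite addn0.
by rewrite IH bops_lit addnS.
Qed.

Lemma In_zip2 (S T : Type) (s : seq S) (t : seq T) x :
  List.In x (zip s t) -> List.In x.2 t.
Proof.
elim: s t => [|a s IH] [|b t] //= [<-|H]; [by left|by right; apply: IH].
Qed.

Lemma In_zip_ex (S T : Type) (s : seq S) (t : seq T) y :
  size s = size t -> List.In y t -> exists a, List.In (a, y) (zip s t).
Proof.
elim: s t => [|a s IH] [|b t] //= [Hs] [<-|H].
- by exists a; left.
- by case: (IH t Hs H) => c Hc; exists c; right.
Qed.

Section Sem.
Variable A : EBA.

Lemma minterm_ops (ps : seq (prd A)) b w : minterm ps b = Some w -> bops w < size ps.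
Proof.
rewrite /minterm.
have := size_zip b ps.
case: (zip b ps) => [|[b0 p0] r] //= Hs [<-].
rewrite bops_conj bops_lit add0n.
by rewrite -ltnS Hs ltnS geq_minr.
Qed.

Lemma bsize_conj (x : bterm (prd A)) (s : seq (bterm (prd A))) k :
  bsize x <= k -> (forall y, List.In y s -> bsize y <= k) -> bsize (conj_list x s) <= k.
Proof.
elim: s x => [|y s IH] x //= Hx Hs.
rewrite geq_max Hx IH //; first by apply: Hs; left.
by move=> z Hz; apply: Hs; right.
Qed.

Lemma bsize_lit b (p : prd A) : bsize (lit b p) = psize p.
Proof. by case: b. Qed.

Lemma minterm_size (ps : seq (prd A)) b w k : minterm ps b = Some w ->
  (forall p, List.In p ps -> psize p <= k) -> bsize w <= k.
Proof.
rewrite /minterm.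
have Hz : forall x, List.In x (zip b ps) -> List.In x.2 ps by move=> x; apply: In_zip2.
case: (zip b ps) Hz => [|[b0 p0] r] //= Hz [<-] Hk.
apply: bsize_conj.
- by rewrite bsize_lit; apply: Hk; apply: (Hz (b0, p0)); left.
- move=> y /In_map [z [Hzr ->]]; rewrite bsize_lit; apply: Hk.
  by apply: Hz; right.
Qed.

Lemma lit_sem b (p : prd A) a :
  interp (beval (lit b p)) a <-> (interp p a <-> b = true).
Proof.
case: b => /=.
  by split; [move=> H; split|case=> _ H; apply: H].
rewrite interp_neg; split.
- by move=> H; split; [move/H|].
- by move=> [H _] /H.
Qed.

Lemma conj_sem (x : bterm (prd A)) s a :
  interp (beval (conj_list x s)) a <->
  interp (beval x) a /\ List.Forall (fun y => interp (beval y) a) s.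
Proof.
elim: s x => [|y s IH] x /=; first by split=> [H|[]//]; split.
rewrite interp_and IH; split.
- by case=> H1 [H2 H3]; split=> //; constructor.
- by case=> H1 H2; inversion H2; split.
Qed.

Lemma minterm_sem (ps : seq (prd A)) b w a : minterm ps b = Some w ->
  (interp (beval w) a <-> List.Forall (fun x => interp x.2 a <-> x.1 = true) (zip b ps)).
Proof.
rewrite /minterm; case: (zip b ps) => [|[b0 p0] r] //= [<-].
rewrite conj_sem lit_sem; split.
- case=> H1 H2; constructor => //.
  elim: r H2 => [|z r IH] H2 //=; inversion H2; subst.
  constructor; [exact/lit_sem|exact: IH].
- move=> H; inversion H; subst; split => //.
  elim: r H3 {H} => [|z r IH] H3 //=; inversion H3; subst.
  constructor; [exact/lit_sem|exact: IH].
Qed.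

Lemma minterm_decides (ps : seq (prd A)) b w p :
  size b = size ps -> minterm ps b = Some w -> List.In p ps ->
  (exists a, interp (beval w) a /\ interp p a) ->
  forall a, interp (beval w) a -> interp p a.
Proof.
move=> Hs Hm Hp [a0 [Hw0 Hp0]] a Hw.
case: (In_zip_ex Hs Hp) => bit Hin.
move/(minterm_sem a0 Hm): Hw0 => /List.Forall_forall /(_ _ Hin) /= H0.
move/(minterm_sem a Hm): Hw => /List.Forall_forall /(_ _ Hin) /= H.
by apply/H; apply/H0.
Qed.

Lemma signs_exist (ps : seq (prd A)) a :
  exists b, size b = size ps /\
    List.Forall (fun x => interp x.2 a <-> x.1 = true) (zip b ps).
Proof.
elim: ps => [|p ps [b [Hs Hf]]]; first by exists [::].
case: (classic (interp p a)) => H.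
- exists (true :: b); split; first by rewrite /= Hs.
  by constructor.
- exists (false :: b); split; first by rewrite /= Hs.
  by constructor => //=; split.
Qed.

Lemma minterm_exists (ps : seq (prd A)) a : ps <> [::] ->
  exists b w, size b = size ps /\ minterm ps b = Some w /\ interp (beval w) a.
Proof.
move=> Hne; case: (signs_exist ps a) => b [Hs Hf].
case: ps Hne Hs Hf => [//|p ps] _; case: b => [//|b0 b] Hs Hf.
exists (b0 :: b), (conj_list (lit b0 p) [seq lit x.1 x.2 | x <- zip b ps]).
split=> //; split=> //.
by apply/(@minterm_sem (p :: ps) (b0 :: b) _ a (erefl _)).
Qed.

End Sem.

Section Alg.
Variable A : EBA.
Variable M : SFA A.
Local Notation Q := (st M).
Local Notation Delta := (delta M).

Definition ps_of (p : Q) := map (@lab A M) (outs p).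
Definition cands (p : Q) :=
  pmap (fun b => omap (fun w => (b, w)) (minterm (ps_of p) b)) (signvecs (size (ps_of p))).
Definition mts (p : Q) := [seq bw <- cands p | @issat A (beval bw.2)].
Definition pairs (p : Q) := [seq (t, bw) | t <- outs p, bw <- mts p].
Definition chk (x : trans M * (seq bool * bterm (prd A))) := BAnd x.2.2 (BBase (lab x.1)).
Definition ents (p : Q) :=
  [seq LE p x.2.1 x.2.2 (tgt x.1) | x <- [seq x <- pairs p | @issat A (beval (chk x))]].

Lemma step1E p : step1_at p = (ents p, size Delta + size (ps_of p) * size (signvecs (size (ps_of p)))
   + \sum_(bw <- cands p) (1 + ccost bw.2) + \sum_(x <- pairs p) (1 + ccost (chk x))).
Proof. by []. Qed.

Definition Kc := @csat A (mhat M) (ksize M).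
Definition keys := flatten [seq [seq (p, bw.1) | bw <- cands p] | p <- enum Q].

Lemma size_ps p : size (ps_of p) = mq p.
Proof. by rewrite size_map. Qed.

Lemma In_outs d p : List.In d (outs p) <-> List.In d Delta /\ src d = p.
Proof. by rewrite /outs In_filter; split=> -[H1 /eqP H2]. Qed.

Lemma In_cands p bw : List.In bw (cands p) <->
  size bw.1 = mq p /\ minterm (ps_of p) bw.1 = Some bw.2.
Proof.
rewrite /cands In_pmap; split.
- case=> b [/In_signvecs Hb]; case E: (minterm (ps_of p) b) => [w|] //= [<-].
  by rewrite -size_ps.
- case: bw => b w /= [Hb Hm]; exists b; split; first by apply/In_signvecs; rewrite size_ps.
  by rewrite Hm.
Qed.

Lemma In_mts p bw : List.In bw (mts p) <-> List.In bw (cands p) /\ issat (beval bw.2).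
Proof. exact: In_filter. Qed.

Lemma In_ents p e : List.In e (ents p) <->
  exists d bw, List.In d (outs p) /\ List.In bw (mts p) /\
    issat (beval (BAnd bw.2 (BBase (lab d)))) /\ e = LE p bw.1 bw.2 (tgt d).
Proof.
rewrite /ents In_map; split.
- case=> x [/In_filter [/In_allpairs [d [bw [Hd [Hbw ->]]]] Hs] ->].
  by exists d, bw.
- case=> d [bw [Hd [Hbw [Hs ->]]]]; exists (d, bw); split=> //.
  apply/In_filter; split=> //; apply/In_allpairs; by exists d, bw.
Qed.

Lemma In_DL e : List.In e (DL M) <->
  exists p d bw, List.In d (outs p) /\ List.In bw (mts p) /\
    issat (beval (BAnd bw.2 (BBase (lab d)))) /\ e = LE p bw.1 bw.2 (tgt d).
Proof.
rewrite /DL In_flatten; split.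
- case=> l [/In_map [p [_ ->]]]; rewrite step1E /= => /In_ents H.
  by exists p.
- case=> p H; exists (step1_at p).1; split.
  + by apply/In_map; exists p; split=> //; apply: In_mem; rewrite mem_enum.
  + by rewrite step1E; apply/In_ents.
Qed.

Lemma psize_le d : List.In d Delta -> psize (lab d) <= ksize M.
Proof.
rewrite /ksize; elim: Delta => [|t l IH] //= [<-|H]; rewrite big_cons.
- exact: leq_maxl.
- by apply: leq_trans (leq_maxr _ _); apply: IH.
Qed.

Lemma mq_le (p : Q) : mq p <= mhat M.
Proof. by rewrite /mhat; apply: (leq_bigmax p). Qed.

Lemma cand_bounds p bw : List.In bw (cands p) ->
  bops bw.2 < mq p /\ bsize bw.2 <= ksize M.
Proof.
case/In_cands => _ Hm; split.
- by rewrite -size_ps; apply: minterm_ops Hm.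
- apply: (minterm_size Hm) => q /In_map [d [/In_outs [Hd _] ->]].
  exact: psize_le.
Qed.

Lemma ccost_and (w : bterm (prd A)) (q : prd A) :
  bops w < mhat M -> bsize w <= ksize M -> psize q <= ksize M ->
  ccost (BAnd w (BBase q)) <= Kc.
Proof.
move=> H1 H2 H3; rewrite /ccost /Kc /=; apply: csat_mono.
- by rewrite addn0.
- by rewrite geq_max H2.
Qed.

Lemma DL_facts e : List.In e (DL M) ->
  [/\ minterm (ps_of (le_src e)) (le_sig e) = Some (le_term e),
      size (le_sig e) = mq (le_src e),
      issat (beval (le_term e)),
      exists d, List.In d (outs (le_src e)) /\ tgt d = le_tgt e /\
                issat (beval (BAnd (le_term e) (BBase (lab d)))) &
      List.In (le_src e, le_sig e) keys /\ bops (le_term e) < mhat M /\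
      bsize (le_term e) <= ksize M].
Proof.
case/In_DL => p [d [bw [Hd [/In_mts [Hc Hs] [Hs2 ->]]]]] /=.
have [Hsz Hm] := proj1 (In_cands p bw) Hc.
have [Hb1 Hb2] := cand_bounds Hc.
split=> //.
- by exists d.
- split; last split=> //.
  + apply/In_flatten; exists [seq (p, bw.1) | bw <- cands p]; split.
    * by apply/In_map; exists p; split=> //; apply: In_mem; rewrite mem_enum.
    * by apply/In_map; exists bw.
  + exact: leq_trans Hb1 (mq_le p).
Qed.

Lemma DL_intro p d bw : List.In d (outs p) -> List.In bw (cands p) ->
  issat (beval bw.2) -> issat (beval (BAnd bw.2 (BBase (lab d)))) ->
  List.In (LE p bw.1 bw.2 (tgt d)) (DL M).
Proof.
move=> Hd Hc Hs Hs2; apply/In_DL; exists p, d, bw; split=> //; split=> //.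
exact/In_mts.
Qed.

Lemma foldl_N0 (l : seq (lentry M * Q)) (N : ctr M) t b i :
  foldl (fun N (x : lentry M * Q) =>
           upd N (le_src x.1) (le_sig x.1) x.2 (N (le_src x.1) (le_sig x.1) x.2).+1) N l t b i
  = N t b i + count (fun x => [&& t == le_src x.1, b == le_sig x.1 & i == x.2]) l.
Proof.
elim: l N => [|x l IH] N /=; first by rewrite addn0.
rewrite IH /upd; case: ifP => H.
- case/and3P: H => /eqP -> /eqP -> /eqP ->; rewrite ?eqxx /=; lia.
- by [].
Qed.

Lemma count_pairsQ (l : seq (lentry M)) t b i :
  count (fun x => [&& t == le_src x.1, b == le_sig x.1 & i == x.2])
        [seq (e, p) | e <- l, p <- enum Q]
  = count (fun e => (t == le_src e) && (b == le_sig e)) l.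
Proof.
elim: l => [|e l IH] //=.
rewrite count_cat IH count_map; congr (_ + _).
rewrite (@eq_count _ _ (fun p => ((t == le_src e) && (b == le_sig e)) && (p == i))); last first.
  by move=> p /=; rewrite andbA (eq_sym i).
case: ((t == le_src e) && (b == le_sig e)) => /=.
- by have := count_uniq_mem i (enum_uniq Q); rewrite mem_enum.
- by elim: (enum Q).
Qed.

Lemma N0_spec t b i :
  N0 t b i = count (fun e => (t == le_src e) && (b == le_sig e)) (DL M).
Proof. by rewrite /N0 foldl_N0 count_pairsQ. Qed.

Definition scanF (S : {set Q * Q}) (t : Q) (w : bterm (prd A))
    (acc : {set Q * Q} * nat) (d : trans M) : {set Q * Q} * nat :=
  if (src d, t) \in S then
    let chk := BAnd w (BBase (lab d)) in
    ((if @issat A (beval chk) then (src d, t) |: acc.1 else acc.1),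
     acc.2 + 1 + ccost chk)
  else (acc.1, acc.2 + 1).

Lemma scanE S i t w NS : scan_preds S i t w NS = foldl (scanF S t w) (NS, 0) (Defs.predD i).
Proof. by []. Qed.

Lemma scan_gen S t w l (NS : {set Q * Q}) c :
  (forall d, List.In d l -> List.In d Delta) -> bops w < mhat M -> bsize w <= ksize M ->
  (forall x, x \in (foldl (scanF S t w) (NS, c) l).1 <->
     x \in NS \/ exists d, List.In d l /\ x = (src d, t) /\ x \in S /\
                   issat (beval (BAnd w (BBase (lab d))))) /\
  (foldl (scanF S t w) (NS, c) l).2 <= c + size l * Kc.+1.
Proof.
move=> Hl Hb Hs; elim: l NS c Hl => [|d l IH] NS c Hl /=.
  by split=> [x|]; [split=> [H|[H|[d [[] _]]]]; [left|] | rewrite addn0].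
have Hd : List.In d Delta by apply: Hl; left.
have Hl' : forall d, List.In d l -> List.In d Delta by move=> d' H; apply: Hl; right.
rewrite /scanF -/(scanF S t w); case HS: ((src d, t) \in S) => /=.
- set NS' := (if _ then _ else _).
  have [IH1 IH2] := IH NS' (c + 1 + ccost (BAnd w (BBase (lab d)))) Hl'.
  split.
  + move=> x; rewrite IH1 /NS'; split.
    * case=> [|[d' [H1 H2]]]; last by right; exists d'; split=> //; right.
      case: ifP => Hsat; last by left.
      rewrite in_setU1 => /orP [/eqP ->|H]; last by left.
      by right; exists d; split; [left|split=> //; split].
    * case=> [H|[d' [[<-|H1] [-> [H3 H4]]]]].
      -- by left; case: ifP => // _; rewrite in_setU1 H orbT.
      -- by left; rewrite H4 in_setU1 eqxx.
      -- by right; exists d'.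
  + apply: leq_trans IH2 _.
    have := ccost_and Hb Hs (psize_le Hd); rewrite mulSn; lia.
- have [IH1 IH2] := IH NS (c + 1) Hl'.
  split.
  + move=> x; rewrite IH1; split.
    * case=> [H|[d' [H1 H2]]]; [by left|by right; exists d'; split=> //; right].
    * case=> [H|[d' [[<-|H1] [-> [H3 H4]]]]]; [by left| |by right; exists d'].
      by rewrite H3 in HS.
  + apply: leq_trans IH2 _; rewrite mulSn; lia.
Qed.

Definition cntS (S : {set Q * Q}) (t : Q) (b : seq bool) (x : Q) :=
  count (fun e => [&& t == le_src e, b == le_sig e & (x, le_tgt e) \in S]) (DL M).
Definition cntR (l : seq (lentry M)) (t : Q) (b : seq bool) :=
  count (fun e => (t == le_src e) && (b == le_sig e)) l.

Definition Good (S NS : {set Q * Q}) (N : ctr M) : Prop :=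
  [/\ NS \subset S,
      (forall x y, (x, y) \in NS \/ (x, y) \notin S -> ~ maxsim x y) &
      (forall x y, (x, y) \in S -> (x, y) \notin NS ->
         (x \in final M -> y \in final M) /\
         (forall d e, List.In d Delta -> src d = x -> List.In e (DL M) -> le_src e = y ->
           issat (beval (BAnd (le_term e) (BBase (lab d)))) -> 0 < N y (le_sig e) (tgt d)))].

Definition Inv (s : lstate M) :=
  Good (ls_sim s) (ls_notsim s) (ls_ctr s) /\
  forall t b x, ls_ctr s t b x = cntS (ls_sim s) t b x.

Definition LInv (i : Q) (S' : {set Q * Q}) (l : seq (lentry M)) (st : lstate M) :=
  [/\ ls_sim st = S', Good S' (ls_notsim st) (ls_ctr st) &
      forall t b x, ls_ctr st t b x = cntS S' t b x + (x == i) * cntR l t b].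

Definition P2 (N : ctr M) :=
  \sum_(x : Q) \sum_(k <- keys) (0 < N k.1 k.2 x) * (size (Defs.predD x) * Kc.+1).

Definition Phi (s : lstate M) :=
  \sum_(x in ls_sim s) (2 + size (predL x.2)) + P2 (ls_ctr s).

Definition bstep (i : Q) (S : {set Q * Q}) (acc : lstate M * nat) (e : lentry M) :
    lstate M * nat :=
  let N := ls_ctr acc.1 in
  let v := (N (le_src e) (le_sig e) i).-1 in
  let N' := upd N (le_src e) (le_sig e) i v in
  if v == 0 then
    let r := scan_preds S i (le_src e) (le_term e) (ls_notsim acc.1) in
    (LS S r.1 N', acc.2 + 1 + r.2)
  else (LS S (ls_notsim acc.1) N', acc.2 + 1).

Lemma bodyE i j s : body i j s =
  foldl (bstep i (ls_sim s :\ (i, j)))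
        (LS (ls_sim s :\ (i, j)) (ls_notsim s :\ (i, j)) (ls_ctr s), 1) (predL j).
Proof. by []. Qed.

Lemma term_uniq e e' : List.In e (DL M) -> List.In e' (DL M) ->
  le_src e = le_src e' -> le_sig e = le_sig e' -> le_term e = le_term e'.
Proof.
move=> /DL_facts [H1 _ _ _ _] /DL_facts [H2 _ _ _ _] E1 E2.
by move: H1; rewrite E1 E2 H2 => -[].
Qed.

Lemma P2_le (N N' : ctr M) :
  (forall t b x, 0 < N' t b x -> 0 < N t b x) -> P2 N' <= P2 N.
Proof.
move=> H; apply: leq_sum => x _; apply: sum_seq_le => k.
apply: leq_mul => //; case: (ltnP 0 (N' k.1 k.2 x)) => // /H ->.
by [].
Qed.

Lemma P2_drop (N N' : ctr M) t0 b0 i :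
  (forall t b x, 0 < N' t b x -> 0 < N t b x) -> 0 < N t0 b0 i -> N' t0 b0 i = 0 ->
  List.In (t0, b0) keys -> P2 N' + size (Defs.predD i) * Kc.+1 <= P2 N.
Proof.
move=> H H0 H0' Hk; rewrite /P2 (bigD1 i) //= [X in _ <= X](bigD1 i) //=.
have H1 : \sum_(x | x != i) \sum_(k <- keys) (0 < N' k.1 k.2 x) * (size (Defs.predD x) * Kc.+1)
       <= \sum_(x | x != i) \sum_(k <- keys) (0 < N k.1 k.2 x) * (size (Defs.predD x) * Kc.+1).
  apply: leq_sum => x _; apply: sum_seq_le => k.
  apply: leq_mul => //; case: (ltnP 0 (N' k.1 k.2 x)) => // /H ->; by [].
have H2 := @sum_seq_drop _ keys (fun k => (0 < N k.1 k.2 i) * (size (Defs.predD i) * Kc.+1))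
   (fun k => (0 < N' k.1 k.2 i) * (size (Defs.predD i) * Kc.+1)) _ (size (Defs.predD i) * Kc.+1) Hk.
have H3 : (forall k, (0 < N' k.1 k.2 i) * (size (Defs.predD i) * Kc.+1) <=
                   (0 < N k.1 k.2 i) * (size (Defs.predD i) * Kc.+1)).
  move=> k; apply: leq_mul => //; case: (ltnP 0 (N' k.1 k.2 i)) => // /H ->; by [].
have := H2 H3; rewrite /= H0 H0' /= mul1n add0n => /(_ (leqnn _)).
lia.
Qed.

Lemma In_predD d i : List.In d (Defs.predD i) <-> List.In d Delta /\ tgt d = i.
Proof. by rewrite /Defs.predD In_filter; split=> -[H1 /eqP H2]. Qed.

Lemma step_spec i S' e0 l st c :
  List.In e0 (DL M) -> LInv i S' (e0 :: l) st ->
  LInv i S' l (bstep i S' (st, c) e0).1 /\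
  (bstep i S' (st, c) e0).2 + P2 (ls_ctr (bstep i S' (st, c) e0).1) <= c + 1 + P2 (ls_ctr st).
Proof.
move=> He0 [Hsim [HNS HL3 HL4] Hctr].
have [Hm0 Hsz0 Hsat0 _ [Hkey [Hops Hbs]]] := DL_facts He0.
set N := ls_ctr st.
set t0 := le_src e0; set b0 := le_sig e0; set w0 := le_term e0.
have HN : N t0 b0 i = (cntS S' t0 b0 i + cntR l t0 b0).+1.
  by rewrite /N Hctr eqxx mul1n /cntR /= /t0 /b0 !eqxx /= addnS.
set v := (N t0 b0 i).-1.
have Hv : v = cntS S' t0 b0 i + cntR l t0 b0 by rewrite /v HN.
set N' := upd N t0 b0 i v.
have HN' : forall t b x, N' t b x = cntS S' t b x + (x == i) * cntR l t b.
  move=> t b x; rewrite /N' /upd; case: ifP => [/and3P [/eqP -> /eqP -> /eqP ->]|H].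
  - by rewrite eqxx mul1n.
  - rewrite /N Hctr; congr (_ + _); case: (x =P i) => [Ex|] //=.
    rewrite Ex eqxx andbT in H.
    by rewrite /cntR /= -/t0 -/b0 H.
have Hpos : forall t b x, 0 < N' t b x -> 0 < N t b x.
  move=> t b x; rewrite /N' /upd; case: ifP => // /and3P [/eqP -> /eqP -> /eqP ->] _.
  by rewrite HN.
have Hbst : bstep i S' (st, c) e0 =
   if v == 0 then (LS S' (scan_preds S' i t0 w0 (ls_notsim st)).1 N',
                   c + 1 + (scan_preds S' i t0 w0 (ls_notsim st)).2)
   else (LS S' (ls_notsim st) N', c + 1) by [].
rewrite Hbst; case: ifP => Ev.
- move/eqP: Ev => Ev.
  have HC0 : cntS S' t0 b0 i = 0 by move: Hv; rewrite Ev; lia.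
  have HDi : forall d, List.In d (Defs.predD i) -> List.In d Delta by move=> d /In_predD [].
  have [Hr1 Hr2] := scan_gen S' t0 (ls_notsim st) 0 HDi Hops Hbs.
  rewrite -scanE in Hr1 Hr2.
  set r := scan_preds S' i t0 w0 (ls_notsim st) in Hr1 Hr2 *.
  split; last first.
  + have HN'0 : N' t0 b0 i = 0 by rewrite /N' /upd !eqxx.
    have HN0 : 0 < N t0 b0 i by rewrite HN.
    have := P2_drop Hpos HN0 HN'0 Hkey.
    rewrite /= add0n in Hr2; move: Hr2.
    set X := P2 N'. set Y := P2 N. set Z := size (Defs.predD i) * Kc.+1. rewrite /=. lia.
  split=> //=.
  split.
  + apply/subsetP => x /Hr1 [/(subsetP HNS)//|[d [_ [_ [H _]]]]] //.
  + move=> x y [/Hr1 [H|[d [Hd [[-> ->] [HS Hs]]]]]|H].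
    * by apply: HL3; left.
    * case=> R [HR HRxy].
      case/issatP: Hs => a /interp_and [Ha1 Ha2].
      case/In_predD: Hd => Hd Hdi.
      have Hct : ctrans (src d) a i by exists d; split=> //; split=> //; split.
      case: (proj2 (HR _ _ HRxy) a i Hct) => r' [[d'' [Hd'' [Hs'' [Ht'' Ha'']]]] HRr].
      have Hc0 : List.In (b0, w0) (cands t0) by apply/In_cands.
      have Hin : List.In (LE t0 b0 w0 (tgt d'')) (DL M).
        apply: (@DL_intro t0 d'' (b0, w0)) => //; first by apply/In_outs.
        by apply/issatP; exists a; apply/interp_and.
      have := count0_In HC0 Hin; rewrite /= !eqxx /= Ht'' => Hni.
      apply: (HL3 i r'); first by right; rewrite Hni.
      by exists R.
    * by apply: HL3; right.
  + move=> x y HS Hnr.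
    have HnNS : (x, y) \notin ls_notsim st by apply/negP => H; move/negP: Hnr; apply; apply/Hr1; left.
    have [Hf HL] := HL4 x y HS HnNS; split=> // d e Hd Hsd He Hse Hsat.
    move: (HL d e Hd Hsd He Hse Hsat); rewrite /N' /upd; case: ifP => // /and3P [/eqP E1 /eqP E2 /eqP E3].
    exfalso; move/negP: Hnr; apply; apply/Hr1; right; exists d.
    split; first by apply/In_predD.
    move: E1 E2; rewrite /t0 /b0 => E1 E2.
    split; first by rewrite Hsd E1.
    split=> //.
    have -> : le_term e0 = le_term e by apply: term_uniq => //; congruence.
    by [].
- split; last by rewrite /=; have := P2_le Hpos; set X := P2 N'; set Y := P2 N; lia.
  split=> //=; split=> //.
  move=> x y HS HnNS; have [Hf HL] := HL4 x y HS HnNS; split=> // d e Hd Hsd He Hse Hsat.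
  move: (HL d e Hd Hsd He Hse Hsat); rewrite /N' /upd; case: ifP => // /and3P [/eqP E1 /eqP E2 /eqP E3] _.
  by rewrite lt0n Ev.
Qed.

Lemma loop_spec i S' l st c :
  (forall e, List.In e l -> List.In e (DL M)) -> LInv i S' l st ->
  LInv i S' [::] (foldl (bstep i S') (st, c) l).1 /\
  (foldl (bstep i S') (st, c) l).2 + P2 (ls_ctr (foldl (bstep i S') (st, c) l).1)
    <= c + size l + P2 (ls_ctr st).
Proof.
elim: l st c => [|e l IH] st c Hl HI /=; first by rewrite addn0.
have He : List.In e (DL M) by apply: Hl; left.
have [HI' Hc'] := step_spec c He HI.
case E: (bstep i S' (st, c) e) HI' Hc' => [st' c'] /= HI' Hc'.
have [H1 H2] := IH st' c' (fun e' H => Hl e' (or_intror H)) HI'.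
split=> //; move: H2 Hc'.
set X := P2 _; set Y := P2 (ls_ctr st'); set Z := P2 (ls_ctr st); lia.
Qed.

Lemma cnt_split (S : {set Q * Q}) i j t b x : (i, j) \in S ->
  cntS S t b x = cntS (S :\ (i, j)) t b x + (x == i) * cntR (predL j) t b.
Proof.
move=> Hij; rewrite /cntS /cntR /predL count_filter.
generalize (DL M) => L.
elim: L => [|e L IH]; first by rewrite /= muln0.
rewrite /= IH mulnDr addnACA; congr (_ + _).
rewrite in_setD1 xpair_eqE.
case: (x =P i) => [->|_]; case: (le_tgt e =P j) => [->|_] /=;
  rewrite ?Hij ?andbT ?andbF ?muln0 ?mul1n ?addn0 //.
Qed.

Lemma body_spec i j s : Inv s -> (i, j) \in ls_notsim s ->
  Inv (body i j s).1 /\ (body i j s).2 + Phi (body i j s).1 <= Phi s.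
Proof.
move=> [[HNS HG2 HG3] Hctr] Hij.
have HijS : (i, j) \in ls_sim s by apply: (subsetP HNS).
set S' := ls_sim s :\ (i, j).
have HL : LInv i S' (predL j) (LS S' (ls_notsim s :\ (i, j)) (ls_ctr s)).
  split=> //=.
  - split.
    + by apply: setSD.
    + move=> x y [H|]; first by apply: HG2; left; move: H; rewrite in_setD1 => /andP [].
      rewrite in_setD1 negb_and negbK => /orP [/eqP E|Hn].
      * by case: E => -> ->; apply: HG2; left.
      * by apply: HG2; right.
    + move=> x y; rewrite !in_setD1 => /andP [Hne HS]; rewrite Hne /= => HnNS.
      exact: HG3.
  - by move=> t b x; rewrite Hctr; apply: cnt_split.
have Hall : forall e, List.In e (predL j) -> List.In e (DL M) by move=> e /In_filter [].
rewrite bodyE; have [[Hsim HG Hc] Hcost] := loop_spec 1 Hall HL.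
move: Hsim HG Hc Hcost; set st := (foldl _ _ _) => Hsim HG Hc Hcost.
split.
- split; first by rewrite Hsim.
  by move=> t b x; rewrite Hc /cntR /= muln0 addn0 Hsim.
- rewrite /Phi Hsim (big_setD1 (i, j) HijS) /=.
  move: Hcost; rewrite -/S'.
  set X := P2 _; set Y := P2 _; set Z := \sum_(x in S') _; lia.
Qed.

Lemma run_spec s c s' : lrun s c s' -> Inv s -> Inv s' /\ c + Phi s' <= Phi s.
Proof.
elim => [s0|s0 i j s1 c1 c2 s2 Hin Hb Hr IH] HI; first by split.
have := body_spec HI Hin; rewrite Hb /= => -[HI1 H1].
have [HI2 H2] := IH HI1; split=> //.
move: H1 H2; set X := Phi s0; set Y := Phi s1; set Z := Phi s2; lia.
Qed.

Lemma init_inv : Inv (init_state M).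
Proof.
split.
- split.
  + exact: subsetT.
  + move=> x y [H|H]; last by rewrite /= /Sim0 in_setT in H.
    rewrite /= /NotSim0 inE /= in H; case/andP: H => Hx Hy [R [HR HRxy]].
    by move: (proj1 (HR _ _ HRxy) Hx); rewrite (negbTE Hy).
  + move=> x y _; rewrite /= /NotSim0 inE /= negb_and negbK => Hn; split.
    * by move=> Hx; move: Hn; rewrite Hx.
    * move=> d e Hd Hsd He Hse Hsat; rewrite N0_spec.
      by apply: (In_count_pos He); rewrite /= Hse !eqxx.
- move=> t b x; rewrite /= N0_spec /cntS; apply: eq_count => e.
  by rewrite /Sim0 in_setT andbT.
Qed.

Lemma final_correct s : complete M -> Inv s -> ls_notsim s = set0 ->
  forall p r, (p, r) \in ls_sim s <-> maxsim p r.
Proof.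
move=> Hcomp [[_ HG2 HG3] Hctr] E p r; split.
- move=> Hpr; exists (fun p r => (p, r) \in ls_sim s); split=> //.
  move=> x y Hxy.
  have Hn : (x, y) \notin ls_notsim s by rewrite E in_set0.
  have [Hf HL] := HG3 x y Hxy Hn; split=> // a x' [d [Hd [Hsd [Htd Ha]]]].
  case: (Hcomp y a) => y0 [d0 [Hd0 [Hsd0 [_ Ha0]]]].
  have Hne : ps_of y <> [::].
    move=> H0; have : List.In (lab d0) (ps_of y).
      by apply/In_map; exists d0; split=> //; apply/In_outs.
    by rewrite H0.
  case: (minterm_exists a Hne) => b [w [Hsb [Hm Hw]]].
  have Hc : List.In (b, w) (cands y) by apply/In_cands; rewrite -size_ps.
  have Hsw : issat (beval w) by apply/issatP; exists a.
  have He : List.In (LE y b w (tgt d0)) (DL M).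
    apply: (@DL_intro y d0 (b, w)) => //; first by apply/In_outs.
    by apply/issatP; exists a; apply/interp_and.
  have Hsat : issat (beval (BAnd (le_term (LE y b w (tgt d0))) (BBase (lab d)))).
    by apply/issatP; exists a; apply/interp_and.
  have Hpos := HL d _ Hd Hsd He erefl Hsat.
  rewrite Hctr /cntS /= in Hpos.
  case: (count_pos_In Hpos) => e' [He' /and3P [/eqP E1 /eqP E2 HS']].
  have [Hm' _ _ [d' [Hd' [Ht' Hs']]] _] := DL_facts He'.
  rewrite -E1 -E2 Hm in Hm'; case: Hm' => Ew.
  exists (le_tgt e'); split; last by rewrite -Htd.
  have [Hd'D Hsd'] := proj1 (In_outs _ _) Hd'.
  exists d'; split=> //; split; first by rewrite Hsd' -E1.
  split=> //.
  apply: (@minterm_decides _ (ps_of y) b w (lab d') Hsb Hm) => //.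
  + by apply/In_map; exists d'; split=> //; rewrite -E1 in Hd'.
  + by rewrite Ew; case/issatP: Hs' => a' /interp_and H'; exists a'.
- move=> Hm; case: (boolP ((p, r) \in ls_sim s)) => // Hn; exfalso.
  exact: (HG2 p r (or_intror Hn) Hm).
Qed.

Lemma size_flat_enum (T : Type) (f : Q -> seq T) :
  size (flatten [seq f p | p <- enum Q]) = \sum_(p : Q) size (f p).
Proof.
rewrite size_flatten /shape -map_comp sumnE big_map big_enum /=.
by apply: eq_bigl => p; rewrite inE.
Qed.

Lemma sum_enum (f : Q -> nat) : \sum_(p <- enum Q) f p = \sum_(p : Q) f p.
Proof. by rewrite big_enum /=; apply: eq_bigl => p; rewrite inE. Qed.

Lemma m_sum : size Delta = \sum_(q : Q) mq q.
Proof.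
rewrite -(sum_count_eq (@src A M) Delta); apply: eq_bigr => q _.
by rewrite /mq /outs size_filter.
Qed.

Lemma mq_le_m (q : Q) : mq q <= size Delta.
Proof. by rewrite /mq /outs size_filter count_size. Qed.

Lemma cands_size (p : Q) : size (cands p) <= mq p * 2 ^ mq p.
Proof.
case E: (mq p) => [|k].
- have H : ps_of p = [::] by apply/size0nil; rewrite size_ps.
  by rewrite /cands H.
- rewrite /cands size_pmap; apply: leq_trans (count_size _ _) _.
  rewrite size_signvecs size_ps E; exact: leq_pmull.
Qed.

Lemma mts_size (p : Q) : size (mts p) <= size (cands p).
Proof. by rewrite /mts size_filter count_size. Qed.

Lemma cands_size2 (p : Q) : size (cands p) <= 2 ^ mq p.
Proof.
rewrite /cands size_pmap; apply: leq_trans (count_size _ _) _.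
by rewrite size_signvecs size_ps.
Qed.

Lemma pairs_size (p : Q) : size (pairs p) <= mq p * 2 ^ mq p.
Proof.
rewrite /pairs size_allpairs leq_mul2l; apply/orP; right.
exact: leq_trans (mts_size p) (cands_size2 p).
Qed.

Lemma ents_size (p : Q) : size (ents p) <= mq p * 2 ^ mq p.
Proof.
rewrite /ents size_map size_filter; exact: leq_trans (count_size _ _) (pairs_size p).
Qed.

Definition T1 := \sum_(q : Q) mq q * 2 ^ mq q.
Definition T2 := \sum_(q : Q) 2 ^ mq q.

Lemma DL_size : size (DL M) <= T1.
Proof.
rewrite /DL size_flat_enum; apply: leq_sum => p _.
by rewrite step1E; apply: ents_size.
Qed.

Lemma keys_size : size keys <= T2.
Proof.
rewrite /keys size_flat_enum; apply: leq_sum => p _.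
by rewrite size_map; apply: cands_size2.
Qed.

Lemma cost1_p (p : Q) : (step1_at p).2 <=
  size Delta + 3 * (mq p * 2 ^ mq p) + 2 * (size Delta * Kc * 2 ^ mq p).
Proof.
rewrite step1E /=.
have H1 : \sum_(bw <- cands p) (1 + ccost bw.2) <= size (cands p) * Kc.+1.
  apply: sum_seq_bound => bw Hbw; rewrite add1n ltnS.
  have [Hb Hs] := cand_bounds Hbw.
  rewrite /ccost /Kc; apply: csat_mono => //.
  exact: leq_trans (ltnW Hb) (mq_le p).
have H2 : \sum_(x <- pairs p) (1 + ccost (chk x)) <= size (pairs p) * Kc.+1.
  apply: sum_seq_bound => x /In_allpairs [t [bw [Ht [Hbw ->]]]]; rewrite add1n ltnS.
  have [Hc _] := proj1 (In_mts p bw) Hbw.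
  have [Hb Hs] := cand_bounds Hc.
  apply: ccost_and => //; first exact: leq_trans Hb (mq_le p).
  by apply: psize_le; case/In_outs: Ht.
have H3 : size (cands p) <= mq p * 2 ^ mq p by apply: cands_size.
have H4 := pairs_size p.
have H5 : mq p * 2 ^ mq p * Kc <= size Delta * Kc * 2 ^ mq p.
  by rewrite mulnAC leq_mul2r leq_mul2r mq_le_m !orbT.
have H6 : size (cands p) * Kc.+1 <= mq p * 2 ^ mq p * Kc.+1 by rewrite leq_mul2r H3 orbT.
have H7 : size (pairs p) * Kc.+1 <= mq p * 2 ^ mq p * Kc.+1 by rewrite leq_mul2r H4 orbT.
have H8 : size (ps_of p) * size (signvecs (size (ps_of p))) = mq p * 2 ^ mq p.
  by rewrite size_signvecs size_ps.
move: H1 H2 H5 H6 H7; rewrite H8 !mulnS.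
set a := mq p * 2 ^ mq p; set X := a * Kc; set Y := size Delta * Kc * 2 ^ mq p.
set Z := size (cands p) * Kc.+1; set W := size (pairs p) * Kc.+1. lia.
Qed.

Lemma sumQ_const c : \sum_(p : Q) c = #|Q| * c.
Proof. by rewrite sum_nat_const. Qed.

Lemma sumQ_pred (X : Type) (f : X -> Q) (l : seq X) :
  \sum_(x : Q) size [seq y <- l | f y == x] = size l.
Proof.
rewrite -(sum_count_eq f l); apply: eq_bigr => q _; by rewrite size_filter.
Qed.

Lemma cost_bound : inhabited (dom A) -> complete M ->
  pre_cost M + Phi (init_state M) <= 30 * bound M.
Proof.
move=> [a] Hcomp.
set n := #|Q|; set m := size Delta.
have Hb : bound M = n * T1 + m * Kc * T2 by [].
have h1 : cost1 M <= n * m + 3 * T1 + 2 * (m * Kc * T2).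
  rewrite /cost1 sum_enum.
  apply: (@leq_trans (\sum_(p : Q) (m + 3 * (mq p * 2 ^ mq p) + 2 * (m * Kc * 2 ^ mq p)))).
    by apply: leq_sum => p _; apply: cost1_p.
  rewrite !big_split /= sumQ_const.
  have ET2 : \sum_(i : Q) m * Kc * 2 ^ mq i = m * Kc * T2 by rewrite /T2 big_distrr.
  rewrite ET2 -/T1 big1 //; lia.
have h2 : n <= m.
  rewrite /n -sum1_card /m m_sum; apply: leq_sum => q _.
  case: (Hcomp q a) => p [d [Hd [Hsd _]]].
  rewrite /mq /outs size_filter; apply: (In_count_pos Hd); by rewrite /= Hsd.
have h3 : m <= T1.
  rewrite /m m_sum /T1; apply: leq_sum => q _; by rewrite leq_pmulr // expn_gt0.
have h4 : T1 <= n * T1.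
  rewrite /n -sumQ_const; apply: leq_sum => q _.
  by rewrite /T1 (bigD1 q) //= leq_addr.
have h5 : m * T2 <= 2 * (n * T1).
  rewrite {1}/m m_sum /T2 big_distrl /=.
  apply: (@leq_trans (\sum_(q : Q) \sum_(t : Q) (mq t * 2 ^ mq t + mq q * 2 ^ mq q))).
    apply: leq_sum => q _; rewrite big_distrr /=; apply: leq_sum => t _.
    by rewrite mulnC pow_mix.
  rewrite exchange_big /=. 
  under eq_bigr do rewrite big_split /= sumQ_const.
  by rewrite big_split /= -big_distrr /= sumQ_const -/T1 mul2n -addnn.
have h6 := DL_size.
have h7 := keys_size.
have h8 : \sum_(x in ls_sim (init_state M)) (2 + size (predL x.2)) = n * (2 * n + size (DL M)).
  rewrite /= /Sim0.
  rewrite (eq_bigl (fun x : Q * Q => true && true)); last by move=> x; rewrite in_setT.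
  rewrite -(pair_big predT predT (fun (i j : Q) => 2 + size (predL j))) /=.
  rewrite sumQ_const; congr (_ * _).
  by rewrite big_split /= sumQ_const /predL sumQ_pred -/n mulnC.
have h9 : P2 (ls_ctr (init_state M)) <= size keys * Kc.+1 * m.
  rewrite /P2; apply: (@leq_trans (\sum_(x : Q) size keys * (size (Defs.predD x) * Kc.+1))).
    apply: leq_sum => x _; apply: sum_seq_bound => k _.
    by rewrite -[X in _ <= X]mul1n; apply: leq_mul => //; exact: leq_b1.
  rewrite -big_distrr /= -big_distrl /= /Defs.predD sumQ_pred -/m; lia.
have h10 : size keys * Kc.+1 * m <= m * Kc * T2 + m * T2.
  rewrite mulnS mulnDl [X in _ <= X]addnC; apply: leq_add.
    by rewrite mulnC leq_mul2l h7 orbT.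
  have -> : m * Kc * T2 = T2 * Kc * m by rewrite [LHS]mulnC (mulnC m) mulnA.
  by rewrite !leq_mul2r h7 !orbT.
have h11 : n * m <= n * T1 by rewrite leq_mul2l h3 orbT.
have h12 : n * n <= n * m by rewrite leq_mul2l h2 orbT.
have h13 : n * size (DL M) <= n * T1 by rewrite leq_mul2l h6 orbT.
rewrite /pre_cost /cost2 /cost_pred /cost3 /Phi h8 Hb -/n -/m.
move: h1 h4 h5 h9 h10 h11 h12 h13.
set NT := n * T1; set MKT := m * Kc * T2; set X := P2 _; set Y := size keys * Kc.+1 * m.
set Z := m * T2; set W := n * m; set U := n * n; set V := n * size (DL M).
rewrite (mulnC (size (DL M)) n) -/V mulnDr mulnA -/U.
lia.
Qed.

End Alg.
Theorem lemma4 :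
  exists c : nat, forall (A : EBA) (M : SFA A),
    inhabited (dom A) -> complete M ->
    (* every execution of LocalSim runs within c * bound *)
    (forall (s : lstate M) (c' : nat),
        lrun (init_state M) c' s -> pre_cost M + c' <= c * bound M) /\
    (* and, when the while loop stops, Sim is the maximal simulation *)
    (forall (s : lstate M) (c' : nat),
        lrun (init_state M) c' s -> ls_notsim s = set0 ->
        forall p r, (p, r) \in ls_sim s <-> maxsim p r).
Proof.
exists 30 => A M Hinh Hcomp; split.
- move=> s c' Hrun.
  have [_ H] := run_spec Hrun (init_inv M).
  have := cost_bound Hinh Hcomp.
  move: H; set X := Phi _; set Y := Phi _; set Z := pre_cost M; set W := 30 * bound M.
  lia.
- move=> s c' Hrun E.
  have [HI _] := run_spec Hrun (init_inv M).
  exact: final_correct Hcomp HI E.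
Qed.
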